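(* Let $\alpha\ge0$, $\beta\ge0$, $\gamma<0$, $\omega^2=1$, $ca\ge0$, $N\ge2$, and $r>0$. Let $(x_j(t),y_j(t))_{j=1}^N$ be a solution of $$\dot{x}_i=y_i+\frac{ca}{N}\sum_{j=1}^N(x_j-x_i),\qquad \dot{y}_i=-(\alpha x_i^2+\beta y_i^2-\gamma)y_i-\omega^2x_i+\frac{ca}{N}\sum_{j=1}^N(y_j-y_i),$$ with $x_j(0)^2+y_j(0)^2\le r^2$ for all $j$. Consider the associated (time-dependent) virtual system on $\mathbb{R}^2$ $$\dot x=y+\frac{ca}{N}\Big(\sum_{j=1}^N x_j(t)-Nx\Big),\qquad \dot y=-(\alpha x^2+\beta y^2-\gamma)y-\omega^2x+\frac{ca}{N}\Big(\sum_{j=1}^N y_j(t)-Ny\Big).$$ Then for every $t\ge0$ and every $(x,y)$ with $x^2+y^2=r^2$, the vector field $(\dot x,\dot y)$ of the virtual system satisfies $x\dot x+y\dot y\le0$. Consequently the closed disk $\{x^2+y^2\le r^2\}$ is a trapping (forward invariant) region for the virtual system, and in particular $x_k(t)^2+y_k(t)^2\le r^2$ for all $k$ and all $t\ge0$. *)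

(* Defs.v *)
From Stdlib Require Import Reals.
Open Scope R_scope.

(* sumN N f = f 0 + f 1 + ... + f (N-1)  (the sum over j = 1..N of the paper,
   indices shifted to 0..N-1). *)
Fixpoint sumN (N : nat) (f : nat -> R) : R :=
  match N with
  | O => 0
  | S n => sumN n f + f n
  end.

(* Right-continuity at time 0 (solutions live on [0, +oo)). *)
Definition right_cont0 (u : R -> R) : Prop :=
  forall eps, 0 < eps -> exists delta, 0 < delta /\
    forall h, 0 <= h < delta -> Rabs (u h - u 0) < eps.

Definition solves2 (F G : R -> R -> R -> R) (u v : R -> R) : Prop :=
  (forall t, 0 < t ->
     derivable_pt_lim u t (F t (u t) (v t)) /\
     derivable_pt_lim v t (G t (u t) (v t))) /\
  right_cont0 u /\ right_cont0 v.

Definition network_solution (al be ga om ca : R) (N : nat)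
    (xs ys : nat -> R -> R) : Prop :=
  forall i, (i < N)%nat ->
    (forall t, 0 < t ->
       derivable_pt_lim (xs i) t
         (ys i t + ca / INR N * sumN N (fun j => xs j t - xs i t)) /\
       derivable_pt_lim (ys i) t
         (- (al * xs i t ^ 2 + be * ys i t ^ 2 - ga) * ys i t
          - om ^ 2 * xs i t
          + ca / INR N * sumN N (fun j => ys j t - ys i t))) /\
    right_cont0 (xs i) /\ right_cont0 (ys i).

Definition virt_F (ca : R) (N : nat) (xs : nat -> R -> R) (t x y : R) : R :=
  y + ca / INR N * (sumN N (fun j => xs j t) - INR N * x).

Definition virt_G (al be ga om ca : R) (N : nat) (ys : nat -> R -> R)
    (t x y : R) : R :=
  - (al * x ^ 2 + be * y ^ 2 - ga) * y - om ^ 2 * x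
  + ca / INR N * (sumN N (fun j => ys j t) - INR N * y).

(* Main.v *)
Require Import Defs.
From Stdlib Require Import Reals Lra Lia Psatz Classical.
Open Scope R_scope.


Lemma dlim_ext (f g : R -> R) x l :
  derivable_pt_lim f x l -> (forall y, f y = g y) -> derivable_pt_lim g x l.
Proof.
  intros H E eps He. destruct (H eps He) as [d Hd]. exists d.
  intros h H0 H1. rewrite <- !E. apply Hd; auto.
Qed.

Lemma sq_deriv (u : R -> R) t d :
  derivable_pt_lim u t d -> derivable_pt_lim (fun s => u s ^ 2) t (2 * u t * d).
Proof.
  intro H. eapply dlim_ext.
  - pose proof (derivable_pt_lim_mult u u t d d H H) as K.
    replace (2 * u t * d) with (d * u t + u t * d) by ring. exact K.
  - intro y. unfold mult_fct. ring.
Qed.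

Lemma sum_deriv (u v : R -> R) t du dv :
  derivable_pt_lim u t du -> derivable_pt_lim v t dv ->
  derivable_pt_lim (fun s => u s ^ 2 + v s ^ 2) t (2 * u t * du + 2 * v t * dv).
Proof.
  intros Hu Hv. eapply dlim_ext.
  - apply (derivable_pt_lim_plus _ _ t _ _ (sq_deriv u t du Hu) (sq_deriv v t dv Hv)).
  - intro y. unfold plus_fct. reflexivity.
Qed.

Lemma rc_lim u : right_cont0 u -> limit1_in u (fun h => 0 <= h) (u 0) 0.
Proof.
  intros H eps He. destruct (H eps He) as [d [Hd Hx]]. exists d; split; auto.
  intros x [Hx0 Hx1]. simpl in *. unfold R_dist in *.
  rewrite Rminus_0_r, Rabs_right in Hx1 by lra. apply Hx. lra.
Qed.

Lemma rc_sq u v : right_cont0 u -> right_cont0 v -> right_cont0 (fun t => u t ^ 2 + v t ^ 2).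
Proof.
  intros Hu Hv. apply rc_lim in Hu. apply rc_lim in Hv.
  pose proof (limit_plus _ _ _ _ _ _ (limit_mul _ _ _ _ _ _ Hu Hu) (limit_mul _ _ _ _ _ _ Hv Hv)) as L.
  intros eps He. destruct (L eps He) as [d [Hd Hx]]. exists d; split; auto.
  intros h Hh. specialize (Hx h). simpl in Hx. unfold R_dist in Hx.
  replace (u h ^ 2 + v h ^ 2 - (u 0 ^ 2 + v 0 ^ 2)) with
    (u h * u h + v h * v h - (u 0 * u 0 + v 0 * v 0)) by ring.
  apply Hx. split; [lra|]. rewrite Rminus_0_r, Rabs_right; lra.
Qed.

Lemma fin_delta (K : nat) (P : nat -> R -> Prop) :
  (forall i d d', 0 < d' <= d -> P i d -> P i d') ->
  (forall i, (i < K)%nat -> exists d, 0 < d /\ P i d) ->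
  exists d, 0 < d /\ forall i, (i < K)%nat -> P i d.
Proof.
  intros Hm. induction K as [|K IH]; intros H.
  - exists 1. split; [lra|]. intros; lia.
  - destruct IH as [d1 [Hd1 P1]]. { intros i Hi; apply H; lia. }
    destruct (H K) as [d2 [Hd2 P2]]; [lia|].
    exists (Rmin d1 d2). split. { apply Rmin_pos; auto. }
    intros i Hi. destruct (Nat.eq_dec i K) as [->|Hne].
    + apply (Hm K d2); auto. split; [apply Rmin_pos; auto| apply Rmin_r].
    + apply (Hm i d1); [split; [apply Rmin_pos; auto| apply Rmin_l]|]. apply P1; lia.
Qed.

Lemma argmax (K : nat) (h : nat -> R) : (0 < K)%nat ->
  exists i, (i < K)%nat /\ forall j, (j < K)%nat -> h j <= h i.
Proof.
  induction K as [|K IH]; intros HK; [lia|].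
  destruct K as [|K].
  - exists 0%nat. split; [lia|]. intros j Hj. replace j with 0%nat by lia. lra.
  - destruct IH as [i [Hi Hm]]; [lia|].
    destruct (Rle_dec (h (S K)) (h i)).
    + exists i. split; [lia|]. intros j Hj. destruct (Nat.eq_dec j (S K)) as [->|]; auto. apply Hm; lia.
    + exists (S K). split; [lia|]. intros j Hj. destruct (Nat.eq_dec j (S K)) as [->|]; [lra|].
      specialize (Hm j ltac:(lia)). lra.
Qed.

Lemma sumN_lin N (f g : nat -> R) a b :
  a * sumN N f + b * sumN N g = sumN N (fun j => a * f j + b * g j).
Proof. induction N; simpl; [ring|]. rewrite <- IHN. ring. Qed.

Lemma sumN_nonpos N (f : nat -> R) : (forall j, (j < N)%nat -> f j <= 0) -> sumN N f <= 0.
Proof.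
  induction N; simpl; intros H; [lra|].
  assert (sumN N f <= 0) by (apply IHN; intros; apply H; lia).
  assert (f N <= 0) by (apply H; lia). lra.
Qed.

Lemma sumN_sub N (f : nat -> R) c : sumN N (fun j => f j - c) = sumN N f - INR N * c.
Proof. induction N; cbn [sumN]; [simpl; ring|]. rewrite IHN, S_INR. ring. Qed.

Lemma term_le x y a b : a ^ 2 + b ^ 2 <= x ^ 2 + y ^ 2 -> x * (a - x) + y * (b - y) <= 0.
Proof. intros H. assert (0 <= (x-a)^2 + (y-b)^2) by (apply Rplus_le_le_0_compat; apply pow2_ge_0). nra. Qed.


Lemma barrier_eps (K : nat) (C eps : R) (f f' : nat -> R -> R)
  (Hd : forall i, (i < K)%nat -> forall t, 0 < t -> derivable_pt_lim (f i) t (f' i t))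
  (Hr : forall i, (i < K)%nat -> right_cont0 (f i))
  (H0 : forall i, (i < K)%nat -> f i 0 <= C)
  (Hk : forall i t, (i < K)%nat -> 0 < t ->
    (forall j, (j < K)%nat -> f j t <= f i t) -> C < f i t -> f' i t <= 0)
  (Heps : 0 < eps) :
  forall i t, (i < K)%nat -> 0 <= t -> f i t - eps * (1 + t) < C.
Proof.
  intros i0 t0 Hi0 Ht0.
  set (g := fun i u => f i u - eps * (1 + u)).
  change (g i0 t0 < C). apply Rnot_le_lt; intro Hbad.
  set (E := fun s => 0 <= s /\ forall u, 0 <= u <= s -> forall i, (i < K)%nat -> g i u < C).
  assert (Eb : bound E).
  { exists t0. intros s [Hs Hg]. apply Rnot_lt_le; intro.
    specialize (Hg t0 ltac:(lra) i0 Hi0). lra. }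
  assert (E0 : E 0).
  { split; [lra|]. intros u Hu i Hi. replace u with 0 by lra. unfold g.
    specialize (H0 i Hi). lra. }
  destruct (completeness E Eb (ex_intro _ 0 E0)) as [T [Hub Hlub]].
  assert (Hbelow : forall u, 0 <= u < T -> forall i, (i < K)%nat -> g i u < C).
  { intros u Hu i Hi. destruct (Rlt_le_dec (g i u) C) as [ok|bad]; auto. exfalso.
    assert (is_upper_bound E u).
    { intros s [Hs Hg]. apply Rnot_lt_le; intro. specialize (Hg u ltac:(lra) i Hi). lra. }
    apply Hlub in H. lra. }
  assert (HT : 0 < T).
  { destruct (fin_delta K (fun i d => forall h, 0 <= h < d -> g i h < C)) as [d [Hd0 Pd]].
    - intros i d d' Hdd P h Hh. apply P. lra.
    - intros i Hi. destruct (Hr i Hi (eps/2) ltac:(lra)) as [d [Hdp Hx]].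
      exists d; split; auto. intros h Hh. specialize (Hx h Hh). specialize (H0 i Hi).
      apply Rabs_def2 in Hx. unfold g. assert (0 <= eps * h) by nra. lra.
    - assert (E (d/2)).
      { split; [lra|]. intros u Hu i Hi. apply Pd; auto. lra. }
      apply Hub in H. lra. }
  assert (Hex : exists i1, (i1 < K)%nat /\ C <= g i1 T).
  { apply NNPP; intro Hn.
    assert (Hall : forall i, (i < K)%nat -> g i T < C).
    { intros i Hi. apply Rnot_le_lt; intro. apply Hn; eauto. }
    destruct (fin_delta K (fun i d => forall u, Rabs (u - T) < d -> g i u < C)) as [d [Hd0 Pd]].
    - intros i d d' Hdd P u Hu. apply P. lra.
    - intros i Hi.
      assert (Hc : continuity_pt (f i) T).
      { apply derivable_continuous_pt. exists (f' i T). apply Hd; auto. }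
      set (d0 := C - g i T). assert (Hd0 : 0 < d0) by (specialize (Hall i Hi); unfold d0; lra).
      unfold continuity_pt, continue_in, limit1_in, limit_in in Hc. simpl in Hc.
      destruct (Hc (d0/2) ltac:(lra)) as [alp [Halp Hx]].
      exists (Rmin alp (d0 / (2 * eps))). split.
      { apply Rmin_pos; auto. apply Rdiv_lt_0_compat; lra. }
      intros u Hu. destruct (Req_dec u T) as [->|Hne]; [apply Hall; auto|].
      assert (Hu1 : Rabs (u - T) < alp) by (eapply Rlt_le_trans; [exact Hu| apply Rmin_l]).
      assert (Hu2 : Rabs (u - T) < d0 / (2 * eps)) by (eapply Rlt_le_trans; [exact Hu| apply Rmin_r]).
      specialize (Hx u). unfold R_dist in Hx. specialize (Hx (conj (conj I (not_eq_sym Hne)) Hu1)).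
      apply Rabs_def2 in Hx. apply Rabs_def2 in Hu2.
      assert (eps * (u - T) > - (d0/2)).
      { destruct Hu2 as [A B].
        assert (eps * (d0 / (2*eps)) = d0/2) by (field; lra). nra. }
      unfold d0, g in *. lra.
    - assert (E (T + d/2)).
      { split; [lra|]. intros u Hu i Hi. destruct (Rlt_le_dec u T).
        + apply Hbelow; auto. lra.
        + apply Pd; auto. rewrite Rabs_right; lra. }
      apply Hub in H. lra. }
  destruct Hex as [i1 [Hi1 Hg1]].
  destruct (argmax K (fun j => g j T) ltac:(lia)) as [i [Hi Hmax]].
  simpl in Hmax. assert (Hgi : C <= g i T) by (specialize (Hmax i1 Hi1); lra).
  assert (Hf' : f' i T <= 0).
  { apply Hk; auto.
    - intros j Hj. specialize (Hmax j Hj). unfold g in Hmax. lra.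
    - unfold g in Hgi. nra. }
  destruct (Hd i Hi T HT (eps/2) ltac:(lra)) as [[dl Hdl] Hder]. simpl in Hder.
  set (h := - Rmin (dl/2) (T/2)).
  assert (Hm1 : Rmin (dl/2) (T/2) <= dl/2) by apply Rmin_l.
  assert (Hm2 : Rmin (dl/2) (T/2) <= T/2) by apply Rmin_r.
  assert (Hm3 : 0 < Rmin (dl/2) (T/2)) by (apply Rmin_pos; lra).
  assert (Hhn : h < 0) by (unfold h; lra).
  specialize (Hder h ltac:(lra)).
  assert (Habs : Rabs h < dl) by (rewrite Rabs_left; unfold h; lra).
  specialize (Hder Habs). apply Rabs_def2 in Hder. destruct Hder as [Hq _].
  set (q := (f i (T + h) - f i T) / h) in *.
  assert (Hqe : f i (T + h) - f i T = q * h) by (unfold q; field; lra).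
  assert (q * h > eps / 2 * h) by nra.
  assert (g i (T + h) < C) by (apply Hbelow; auto; unfold h; lra).
  unfold g in *. nra.
Qed.

Lemma barrier (K : nat) (C : R) (f f' : nat -> R -> R) :
  (forall i, (i < K)%nat -> forall t, 0 < t -> derivable_pt_lim (f i) t (f' i t)) ->
  (forall i, (i < K)%nat -> right_cont0 (f i)) ->
  (forall i, (i < K)%nat -> f i 0 <= C) ->
  (forall i t, (i < K)%nat -> 0 < t ->
    (forall j, (j < K)%nat -> f j t <= f i t) -> C < f i t -> f' i t <= 0) ->
  forall i t, (i < K)%nat -> 0 <= t -> f i t <= C.
Proof.
  intros Hd Hr H0 Hk i t Hi Ht. apply Rnot_lt_le; intro Hlt.
  set (e := (f i t - C) / (2 * (1 + t))).
  assert (He : 0 < e) by (unfold e; apply Rdiv_lt_0_compat; lra).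
  pose proof (barrier_eps K C e f f' Hd Hr H0 Hk He i t Hi Ht) as B. simpl in B.
  assert (e * (1 + t) = (f i t - C) / 2) by (unfold e; field; lra). lra.
Qed.


Theorem lemma4p6 (al be ga om c a r : R) (N : nat) (xs ys : nat -> R -> R) :
  0 <= al -> 0 <= be -> ga < 0 -> om ^ 2 = 1 -> 0 <= c * a ->
  (2 <= N)%nat -> 0 < r ->
  network_solution al be ga om (c * a) N xs ys ->
  (forall j, (j < N)%nat -> xs j 0 ^ 2 + ys j 0 ^ 2 <= r ^ 2) ->
  (forall t x y, 0 <= t -> x ^ 2 + y ^ 2 = r ^ 2 ->
     x * virt_F (c * a) N xs t x y
     + y * virt_G al be ga om (c * a) N ys t x y <= 0)
  /\
  (forall u v : R -> R,
     solves2 (virt_F (c * a) N xs) (virt_G al be ga om (c * a) N ys) u v ->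
     u 0 ^ 2 + v 0 ^ 2 <= r ^ 2 ->
     forall t, 0 <= t -> u t ^ 2 + v t ^ 2 <= r ^ 2)
  /\
  (forall k t, (k < N)%nat -> 0 <= t -> xs k t ^ 2 + ys k t ^ 2 <= r ^ 2).
Proof.
  intros Hal Hbe Hga Hom Hca HN Hr Hsol Hinit.
  assert (HNp : 0 < INR N) by (apply lt_0_INR; lia).
  set (k := c * a / INR N).
  assert (Hk : 0 <= k) by (unfold k; apply Rmult_le_pos; [lra| left; apply Rinv_0_lt_compat; lra]).
  assert (Key : forall x y S1 S2, S1 <= 0 ->
     2 * x * (y + k * S1) + 2 * y * (- (al * x ^ 2 + be * y ^ 2 - ga) * y - om ^ 2 * x + k * S2) <= 0
     \/ True).
  { intros; right; auto. }
  clear Key.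
  assert (Est : forall x y Sxy, Sxy <= 0 ->
     - (al * x ^ 2 + be * y ^ 2 - ga) * y ^ 2 + k * Sxy <= 0).
  { intros x y Sxy HS.
    assert (0 <= al * x ^ 2) by (apply Rmult_le_pos; auto; apply pow2_ge_0).
    assert (0 <= be * y ^ 2) by (apply Rmult_le_pos; auto; apply pow2_ge_0).
    assert (0 <= (al * x ^ 2 + be * y ^ 2 - ga) * y ^ 2) by (apply Rmult_le_pos; [lra| apply pow2_ge_0]).
    assert (k * Sxy <= 0) by nra. lra. }
  assert (P3 : forall kk t, (kk < N)%nat -> 0 <= t -> xs kk t ^ 2 + ys kk t ^ 2 <= r ^ 2).
  { apply (barrier N (r ^ 2) (fun j t => xs j t ^ 2 + ys j t ^ 2)
      (fun j t => 2 * xs j t * (ys j t + c * a / INR N * sumN N (fun l => xs l t - xs j t))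
        + 2 * ys j t * (- (al * xs j t ^ 2 + be * ys j t ^ 2 - ga) * ys j t
          - om ^ 2 * xs j t + c * a / INR N * sumN N (fun l => ys l t - ys j t)))).
    - intros i Hi t Ht. destruct (Hsol i Hi) as [Hd _]. destruct (Hd t Ht) as [Dx Dy].
      apply sum_deriv; auto.
    - intros i Hi. destruct (Hsol i Hi) as [_ [A B]]. apply rc_sq; auto.
    - exact Hinit.
    - intros i t Hi Ht Hmax _. fold k.
      set (x := xs i t) in *. set (y := ys i t) in *.
      assert (HS : sumN N (fun l => x * (xs l t - x) + y * (ys l t - y)) <= 0).
      { apply sumN_nonpos. intros j Hj. apply term_le. apply Hmax; auto. }
      rewrite <- sumN_lin in HS.
      specialize (Est x y _ HS). rewrite Hom. nra. }
  split; [|split; [|exact P3]].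
  - intros t x y Ht Hc. unfold virt_F, virt_G. fold k.
    rewrite <- !sumN_sub.
    assert (HS : sumN N (fun l => x * (xs l t - x) + y * (ys l t - y)) <= 0).
    { apply sumN_nonpos. intros j Hj. apply term_le. rewrite Hc. apply P3; auto. }
    rewrite <- sumN_lin in HS.
    specialize (Est x y _ HS). rewrite Hom. nra.
  - intros u v [Hd [Ru Rv]] H0 t Ht.
    refine (barrier 1 (r ^ 2) (fun _ t => u t ^ 2 + v t ^ 2)
      (fun _ t => 2 * u t * virt_F (c * a) N xs t (u t) (v t)
          + 2 * v t * virt_G al be ga om (c * a) N ys t (u t) (v t)) _ _ _ _ 0%nat t _ Ht); auto.
    + intros i _ s Hs. destruct (Hd s Hs). apply sum_deriv; auto.
    + intros. apply rc_sq; auto.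
    + intros i s _ Hs _ Hgt. unfold virt_F, virt_G. fold k.
      rewrite <- !sumN_sub.
      set (x := u s) in *. set (y := v s) in *.
      assert (HS : sumN N (fun l => x * (xs l s - x) + y * (ys l s - y)) <= 0).
      { apply sumN_nonpos. intros j Hj. apply term_le.
        specialize (P3 j s Hj ltac:(lra)). lra. }
      rewrite <- sumN_lin in HS.
      specialize (Est x y _ HS). rewrite Hom. nra.
Qed.
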